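(* Let $\phi:\mathbb{R}^\ell\to[0,\infty)$ be continuously differentiable and let $H=\prod_{i=1}^\ell[a_i,b_i]$ with $a_i<b_i$ be a hyperrectangle with corners $z_1,\dots,z_{2^\ell}$ and side lengths $\delta z_i=b_i-a_i$, $i=1,\dots,\ell$. Let $L_1,\dots,L_\ell$ satisfy $L_i\ge|(\nabla\phi(z))_i|$ for all $z\in H$ and $i=1,\dots,\ell$. Let $\tau\in\mathbb{R}$ and $\gamma^*\ge\max_{i=1,\dots,2^\ell}\phi(z_i)$. If $$\sum_{j=1}^\ell L_j\,\delta z_j<2\gamma^*+2\tau-\frac{2\sum_{i=1}^{2^\ell}\phi(z_i)}{2^\ell},$$ then $\phi(z)<\gamma^*+\tau$ for all $z\in H$. *)

(* Defs.v *)
From HB Require Import structures.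
From mathcomp Require Import all_boot all_order all_algebra.
From mathcomp Require Import all_classical all_reals all_analysis.
Set Implicit Arguments. Unset Strict Implicit. Unset Printing Implicit Defensive.
Import Order.TTheory GRing.Theory Num.Theory.
Import numFieldNormedType.Exports.
Local Open Scope ring_scope.

Definition unitv {R : realType} {l : nat} (i : 'I_l) : 'rV[R]_l := delta_mx 0 i.

Definition gradc {R : realType} {l : nat} (phi : 'rV[R]_l -> R) (z : 'rV[R]_l)
  (i : 'I_l) : R := 'D_(unitv i) phi z.

(* continuously differentiable on R^l: differentiable everywhere, and all
   partial derivatives are continuous (equivalent to C^1 in finite dimension) *)
Definition C1 {R : realType} {l : nat} (phi : 'rV[R]_l -> R) : Prop :=
  (forall z, differentiable phi z) /\ (forall i : 'I_l, continuous (fun z => gradc phi z i)).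

Definition in_box {R : realType} {l : nat} (a b : 'rV[R]_l) (z : 'rV[R]_l) : Prop :=
  forall i : 'I_l, a 0 i <= z 0 i <= b 0 i.

(* corners of H, indexed by s : {ffun 'I_l -> bool} (2^l of them, distinct
   since a_i < b_i): coordinate i is b_i if s i, else a_i *)
Definition corner {R : realType} {l : nat} (a b : 'rV[R]_l) (s : {ffun 'I_l -> bool})
  : 'rV[R]_l := \row_i (if s i then b 0 i else a 0 i).

(* Main.v *)
Require Import Defs.
From HB Require Import structures.
From mathcomp Require Import all_boot all_order all_algebra.
From mathcomp Require Import all_classical all_reals all_analysis.
From mathcomp Require Import lra.
Import Order.TTheory GRing.Theory Num.Theory.
Import numFieldNormedType.Exports.
Local Open Scope ring_scope.

Lemma dline (R : realType) (l : nat) (phi : 'rV[R]_l -> R) (w v : 'rV[R]_l) (t : R) :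
  differentiable phi (w + t *: v) ->
  derivable (fun s : R => phi (w + s *: v)) t 1 /\
  'D_1 (fun s : R => phi (w + s *: v)) t = 'D_v phi (w + t *: v).
Proof.
move=> dphi.
have E : (fun h : R => h^-1 *: (((fun s : R => phi (w + s *: v)) \o shift t) (h *: 1) - phi (w + t *: v)))
   = (fun h : R => h^-1 *: ((phi \o shift (w + t *: v)) (h *: v) - phi (w + t *: v))).
  apply/funext => h /=; congr (_ *: (phi _ - _)).
  by rewrite [h *: 1]mulr1 scalerDl addrCA addrC.
split.
  have := @diff_derivable _ _ _ _ _ v dphi; rewrite /derivable E. exact.
by rewrite /derive E.
Qed.

Lemma lipb (R : realType) (l : nat) (phi : 'rV[R]_l -> R) (a b L : 'rV[R]_l) :
  (forall z, differentiable phi z) ->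
  (forall z, in_box a b z -> forall i : 'I_l, `|gradc phi z i| <= L 0 i) ->
  forall z w, in_box a b z -> in_box a b w ->
  phi z - phi w <= \sum_(j < l) L 0 j * `|z 0 j - w 0 j|.
Proof.
move=> dphi hL z w hz hw.
set v := z - w.
have inb c : 0 <= c <= 1 -> in_box a b (w + c *: v).
  move=> /andP[c0 c1] i; rewrite !mxE.
  have /andP[hz1 hz2] := hz i; have /andP[hw1 hw2] := hw i.
  apply/andP; split; nra.
have hd x : derivable (fun s : R => phi (w + s *: v)) x 1 /\
   'D_1 (fun s : R => phi (w + s *: v)) x = 'D_v phi (w + x *: v).
  exact: dline.
have [c cI E] := @MVT R (fun s : R => phi (w + s *: v))
   (fun s => 'D_v phi (w + s *: v)) 0 1 ltr01
   (fun x _ => ltac:(have := derivableP (proj1 (hd x)); rewrite (proj2 (hd x)); exact))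
   (derivable_within_continuous (fun x _ => proj1 (hd x))).
move: E; rewrite scale0r addr0 scale1r subr0 mulr1 /v.
have -> : w + (z - w) = z by rewrite addrC subrK.
rewrite -/v => ->.
have c01 : 0 <= c <= 1 by move: cI; rewrite in_itv /= => /andP[h1 h2]; rewrite !ltW.
set y := w + c *: v.
have -> : 'D_v phi y = \sum_(j < l) v 0 j * gradc phi y j.
  rewrite deriveE // {1}(row_sum_delta v) linear_sum; apply: eq_bigr => j _.
  by rewrite linearZ /gradc /unitv deriveE.
apply: le_trans (ler_norm _) _. apply: le_trans (ler_norm_sum _ _ _) _; apply: ler_sum => j _.
rewrite normrM mulrC /v !mxE; apply: ler_wpM2r => //.
exact: hL (inb _ c01) j.
Qed.

Lemma flip_sum (R : realType) (l : nat) (j : 'I_l) (g : bool -> R) :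
  2 * \sum_(s : {ffun 'I_l -> bool}) g (s j) = 2 ^+ l * (g true + g false).
Proof.
pose f (s : {ffun 'I_l -> bool}) : {ffun 'I_l -> bool} :=
  [ffun i => if i == j then ~~ s i else s i].
have ff : involutive f.
  by move=> s; apply/ffunP => i; rewrite !ffunE; case: eqP => // ->; rewrite negbK.
have E : \sum_(s : {ffun 'I_l -> bool}) g (s j) = \sum_(s : {ffun 'I_l -> bool}) g (~~ s j).
  rewrite (reindex_inj (inv_inj ff)); apply: eq_bigr => s _.
  by rewrite /f ffunE eqxx.
rewrite mulr2n mulrDl mul1r {2}E -big_split /=.
rewrite (eq_bigr (fun _ => g true + g false)); last first.
  by move=> s _; case: (s j) => //=; rewrite addrC.
by rewrite sumr_const card_ffun card_bool card_ord -mulr_natl natrX.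
Qed.

Theorem lemma3p10 (R : realType) (l : nat) (phi : 'rV[R]_l -> R)
  (a b L : 'rV[R]_l) (tau gstar : R) :
  C1 phi ->
  (forall z, 0 <= phi z) ->
  (forall i : 'I_l, a 0 i < b 0 i) ->
  (forall z, in_box a b z -> forall i : 'I_l, `|gradc phi z i| <= L 0 i) ->
  (forall s : {ffun 'I_l -> bool}, phi (corner a b s) <= gstar) ->
  \sum_(j < l) L 0 j * (b 0 j - a 0 j) <
    2 * gstar + 2 * tau
    - 2 * (\sum_(s : {ffun 'I_l -> bool}) phi (corner a b s)) / (2 ^+ l) ->
  forall z, in_box a b z -> phi z < gstar + tau.
Proof.
move=> [dphi _] _ hab hL _ hS z hz.
set N : R := 2 ^+ l.
set C := \sum_(s : {ffun 'I_l -> bool}) phi (corner a b s).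
set S := \sum_(j < l) L 0 j * (b 0 j - a 0 j).
have N0 : 0 < N by rewrite /N exprn_gt0.
have cin s : in_box a b (corner a b s).
  move=> i; rewrite mxE; have := hab i; case: (s i) => h; by rewrite lexx ltW.
have key s : phi z <= phi (corner a b s) + \sum_(j < l) L 0 j * `|z 0 j - corner a b s 0 j|.
  by rewrite -lerBlDl; apply: lipb hL z _ hz (cin s).
have H1 : N * (2 * phi z) <= 2 * C + N * S.
  have : \sum_(s : {ffun 'I_l -> bool}) phi z <= C + \sum_(s : {ffun 'I_l -> bool}) \sum_(j < l) L 0 j * `|z 0 j - corner a b s 0 j|.
    by rewrite /C -big_split; apply: ler_sum => s _; apply: key.
  rewrite exchange_big /= sumr_const card_ffun card_bool card_ord.
  move=> h; rewrite -mulr_natl natrX -/N in h.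
  have -> : N * S = 2 * \sum_(j < l) L 0 j * \sum_(s : {ffun 'I_l -> bool}) `|z 0 j - corner a b s 0 j|.
    rewrite /S mulr_sumr mulr_sumr; apply: eq_bigr => j _.
    have -> : \sum_(s : {ffun 'I_l -> bool}) `|z 0 j - corner a b s 0 j|
      = \sum_(s : {ffun 'I_l -> bool}) (fun bo => `|z 0 j - (if bo then b 0 j else a 0 j)|) (s j).
      by apply: eq_bigr => s _; rewrite mxE.
    rewrite [in RHS]mulrCA (@flip_sum R l j (fun bo => `|z 0 j - (if bo then b 0 j else a 0 j)|)) /=.
    have /andP[h1 h2] := hz j.
    rewrite (ler0_norm (x := z 0 j - b 0 j)) ?subr_le0 // ger0_norm ?subr_ge0 //.
    rewrite mulrCA; congr (_ * (_ * _)); rewrite opprB; lra.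
  have -> : \sum_(j < l) L 0 j * \sum_(s : {ffun 'I_l -> bool}) `|z 0 j - corner a b s 0 j|
     = \sum_(j < l) \sum_(s : {ffun 'I_l -> bool}) L 0 j * `|z 0 j - corner a b s 0 j|.
    by apply: eq_bigr => j _; rewrite mulr_sumr.
  by rewrite mulrCA -mulrDr ler_pM2l.
have hS' : N * S < N * (2 * gstar + 2 * tau) - 2 * C.
  move: hS; rewrite -(ltr_pM2l N0) mulrBr [N * (_ / _)]mulrC divfK ?gt_eqF //.
have : N * (2 * phi z) < N * (2 * (gstar + tau)).
  apply: le_lt_trans H1 _; rewrite [2 * (gstar + tau)]mulrDr; lra.
rewrite ltr_pM2l // ; lra.
Qed.
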